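(* Let $\mathfrak{M}=(S,\mathcal{L})$ be a Veblenian gamma space all of whose lines have at least $3$ points, and let $\mathcal{H}$ be a flappy hyperplane of $\mathfrak{M}$. Then for all pairwise distinct points $p_1,p_2,p_3\in\mathcal{H}$: $p_1,p_2,p_3$ lie on a common line of $\mathfrak{M}$ if and only if there exist points $a_1,a_2,a_3\in S\setminus\mathcal{H}$ such that for every permutation $(i,j,k)$ of $(1,2,3)$ the points $a_i,a_j$ are distinct and collinear and $p_k$ lies on the line through $a_i$ and $a_j$. Equivalently, in terms of the complement: for lines $L_1,L_2,L_3$ of $\mathfrak{M}$ not contained in $\mathcal{H}$ with pairwise distinct points $L_1^\infty,L_2^\infty,L_3^\infty$, these three points are collinear in $\mathfrak{M}$ if and only if there is a triangle in $\mathfrak{M}\setminus\mathcal{H}$ with sides $K_1,K_2,K_3$ such that $K_i\parallel_\mathcal{H} L_i$ for $i=1,2,3$.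
   Context: A partial linear space is a pair $(S,\mathcal{L})$ of points and lines such that every line has at least two points, every point is on a line, and two distinct lines share at most one point; points are collinear ($a\sim b$) if some line contains both; $[a]_\sim$ is the set of points collinear with $a$. A subspace is a set $X$ such that every line meeting $X$ in at least two points lies in $X$; a hyperplane is a proper subspace meeting every line. A gamma space is a partial linear space where $[a]_\sim$ is a subspace for every point $a$. It is Veblenian if for any two distinct lines $L_1,L_2$ through a point $p$ and any two distinct lines $K_1,K_2$ not through $p$ such that each $K_j$ meets both $L_1,L_2$, the lines $K_1,K_2$ meet. A hyperplane $X$ is flappy if for every line $L\subseteq X$ there is a point $a\notin X$ with $L\subseteq[a]_\sim$. A triangle is a triple of pairwise distinct, pairwise collinear points not on a common line. For a hyperplane $\mathcal{H}$, each line $L\not\subseteq\mathcal{H}$ meets $\mathcal{H}$ in a unique point $L^\infty$; the complement $\mathfrak{M}\setminus\mathcal{H}$ has points $S\setminus\mathcal{H}$, lines $L\setminus\mathcal{H}$ ($L\not\subseteq\mathcal{H}$), and parallelism $L\parallel_\mathcal{H}K$ iff $L^\infty=K^\infty$. *)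

(* Defs.v *)
Set Implicit Arguments.
Section Geometry.
Variables (P Ln : Type) (inc : P -> Ln -> Prop).

Definition partial_linear_space : Prop :=
  (forall L : Ln, exists a b : P, a <> b /\ inc a L /\ inc b L) /\
  (forall a : P, exists L : Ln, inc a L) /\
  (forall (L K : Ln) (a b : P), L <> K ->
     inc a L -> inc a K -> inc b L -> inc b K -> a = b).

Definition collinear (a b : P) : Prop := exists L : Ln, inc a L /\ inc b L.

Definition subspace (X : P -> Prop) : Prop :=
  forall (L : Ln) (a b : P), a <> b -> inc a L -> inc b L -> X a -> X b ->
    forall c : P, inc c L -> X c.

Definition line_in (L : Ln) (X : P -> Prop) : Prop :=
  forall x : P, inc x L -> X x.

Definition hyperplane (X : P -> Prop) : Prop :=
  subspace X /\ (exists p : P, ~ X p) /\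
  (forall L : Ln, exists p : P, inc p L /\ X p).

Definition gamma_space : Prop :=
  partial_linear_space /\ forall a : P, subspace (collinear a).

Definition meets (K L : Ln) : Prop := exists x : P, inc x K /\ inc x L.

Definition veblenian : Prop :=
  forall (p : P) (L1 L2 K1 K2 : Ln),
    L1 <> L2 -> inc p L1 -> inc p L2 ->
    K1 <> K2 -> ~ inc p K1 -> ~ inc p K2 ->
    meets K1 L1 -> meets K1 L2 -> meets K2 L1 -> meets K2 L2 ->
    meets K1 K2.

Definition lines_thick : Prop :=
  forall L : Ln, exists a b c : P,
    a <> b /\ a <> c /\ b <> c /\ inc a L /\ inc b L /\ inc c L.

Definition flappy (X : P -> Prop) : Prop :=
  hyperplane X /\
  forall L : Ln, line_in L X ->
    exists a : P, ~ X a /\ forall x : P, inc x L -> collinear a x.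

(* p = L^oo w.r.t. H, meaningful when L is not contained in H *)
Definition at_infinity (H : P -> Prop) (L : Ln) (p : P) : Prop :=
  inc p L /\ H p.

Definition parallel_H (H : P -> Prop) (L K : Ln) : Prop :=
  exists p : P, at_infinity H L p /\ at_infinity H K p.

(* a triangle of M \ H with sides (lines of M not contained in H) K1 K2 K3:
   vertices b1 b2 b3 off H, pairwise distinct, not on a common line,
   K1 = b2b3, K2 = b1b3, K3 = b1b2. *)
Definition triangle_sides (H : P -> Prop) (K1 K2 K3 : Ln) : Prop :=
  ~ line_in K1 H /\ ~ line_in K2 H /\ ~ line_in K3 H /\
  exists b1 b2 b3 : P,
    ~ H b1 /\ ~ H b2 /\ ~ H b3 /\
    b1 <> b2 /\ b1 <> b3 /\ b2 <> b3 /\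
    inc b2 K1 /\ inc b3 K1 /\ inc b1 K2 /\ inc b3 K2 /\
    inc b1 K3 /\ inc b2 K3 /\
    ~ (exists L : Ln, inc b1 L /\ inc b2 L /\ inc b3 L).

End Geometry.

(* Main.v *)
Require Import Defs.
From Stdlib Require Import Classical.
Set Implicit Arguments.

Lemma line_eq (P Ln : Type) (inc : P -> Ln -> Prop) :
  partial_linear_space inc -> forall {L K : Ln} {a b : P}, a <> b ->
  inc a L -> inc b L -> inc a K -> inc b K -> L = K.
Proof.
  intros [_ [_ h]] L K a b hab h1 h2 h3 h4.
  destruct (classic (L = K)) as [e|n]; auto.
  exfalso; apply hab; exact (h L K a b n h1 h3 h2 h4).
Qed.

Lemma offH (P Ln : Type) (inc : P -> Ln -> Prop) (H : P -> Prop) :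
  subspace inc H -> forall {L : Ln} {p q x : P},
  inc p L -> inc q L -> H p -> H q -> p <> q -> inc x L -> H x.
Proof. intros hs L p q x h1 h2 h3 h4 h5 h6. exact (hs L p q h5 h1 h2 h3 h4 x h6). Qed.

Lemma pick3 (P Ln : Type) (inc : P -> Ln -> Prop) :
  lines_thick inc -> forall (L : Ln) (u v : P), exists w, inc w L /\ w <> u /\ w <> v.
Proof.
  intros ht L u v. destruct (ht L) as [x [y [z [hxy [hxz [hyz [hx [hy hz]]]]]]]].
  destruct (classic (x = u)); destruct (classic (x = v));
  destruct (classic (y = u)); destruct (classic (y = v)); subst;
  first [ exists x; tauto | exists y; tauto | exists z; split; [auto|split; intro; subst; auto] ].
Qed.

Lemma fwd (P Ln : Type) (inc : P -> Ln -> Prop) (H : P -> Prop) :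
  gamma_space inc -> veblenian inc -> lines_thick inc -> flappy inc H ->
  forall p1 p2 p3 : P,
     H p1 -> H p2 -> H p3 -> p1 <> p2 -> p1 <> p3 -> p2 <> p3 ->
     (exists L : Ln, inc p1 L /\ inc p2 L /\ inc p3 L) ->
      (exists a1 a2 a3 : P, ~ H a1 /\ ~ H a2 /\ ~ H a3 /\
         (a1 <> a2 /\ exists L : Ln, inc a1 L /\ inc a2 L /\ inc p3 L) /\
         (a1 <> a3 /\ exists L : Ln, inc a1 L /\ inc a3 L /\ inc p2 L) /\
         (a2 <> a3 /\ exists L : Ln, inc a2 L /\ inc a3 L /\ inc p1 L)).
Proof.
  intros [hpls hgam] hveb hth [[hsub [_ _]] hfl] p1 p2 p3 h1 h2 h3 d12 d13 d23
    [L [i1 [i2 i3]]].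
  assert (hL : line_in inc L H).
  { intros x hx. exact (offH hsub i1 i2 h1 h2 d12 hx). }
  destruct (hfl L hL) as [a [ha hca]].
  destruct (hca p3 i3) as [M3 [am3 p3m3]].
  destruct (hca p2 i2) as [M2 [am2 p2m2]].
  destruct (pick3 hth M3 a p3) as [a2 [a2m3 [da2 da2p3]]].
  assert (ha2 : ~ H a2).
  { intro e. apply ha. exact (offH hsub p3m3 a2m3 h3 e (not_eq_sym da2p3) am3). }
  assert (hcol : collinear inc p1 a2).
  { apply (hgam p1 M3 a p3).
    - intro e; subst; auto.
    - auto. - auto.
    - destruct (hca p1 i1) as [K [k1 k2]]. exists K; auto.
    - exists L; auto.
    - auto. }
  destruct hcol as [N [p1N a2N]].
  assert (LM3 : L <> M3). { intro e; subst. apply ha; auto. }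
  assert (NM2 : N <> M2).
  { intro e; subst. apply ha. exact (offH hsub p1N p2m2 h1 h2 d12 am2). }
  assert (p3N : ~ inc p3 N).
  { intro e. apply ha2. exact (offH hsub p1N e h1 h3 d13 a2N). }
  assert (p3M2 : ~ inc p3 M2).
  { intro e. apply ha. exact (offH hsub p2m2 e h2 h3 d23 am2). }
  destruct (hveb p3 L M3 N M2 LM3 i3 p3m3 NM2 p3N p3M2) as [x [xN xM2]].
  - exists p1; auto. - exists a2; auto. - exists p2; auto. - exists a; auto.
  - assert (hx : ~ H x).
    { intro e. destruct (classic (x = p2)) as [ex|nx].
      - subst. apply ha2. exact (offH hsub p1N xN h1 h2 d12 a2N).
      - apply ha. exact (offH hsub xM2 p2m2 e h2 nx am2). }
    exists a, a2, x. split; [auto|split; [auto|split; [auto|]]].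
    split; [split; [auto| exists M3; auto]|].
    split; [split; [|exists M2; auto]|].
    + intro e; subst x.
      assert (N = M3) by exact (line_eq hpls da2 a2N xN a2m3 am3).
      subst. apply ha. exact (offH hsub p1N p3m3 h1 h3 d13 xN).
    + split; [|exists N; auto].
      intro e; subst x.
      assert (M2 = M3) by exact (line_eq hpls (not_eq_sym da2) am2 xM2 am3 a2m3).
      subst. apply ha. exact (offH hsub p2m2 p3m3 h2 h3 d23 am2).
Qed.

Lemma bwd (P Ln : Type) (inc : P -> Ln -> Prop) (H : P -> Prop) :
  gamma_space inc -> veblenian inc -> subspace inc H ->
  forall p1 p2 p3 a1 a2 a3 : P,
     H p1 -> H p2 -> H p3 -> p1 <> p2 -> p1 <> p3 -> p2 <> p3 ->
     ~ H a1 -> ~ H a2 -> ~ H a3 -> a1 <> a2 -> a1 <> a3 -> a2 <> a3 ->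
     forall M1 M2 M3 : Ln,
     inc a1 M3 -> inc a2 M3 -> inc p3 M3 ->
     inc a1 M2 -> inc a3 M2 -> inc p2 M2 ->
     inc a2 M1 -> inc a3 M1 -> inc p1 M1 ->
     exists L : Ln, inc p1 L /\ inc p2 L /\ inc p3 L.
Proof.
  intros [hpls hgam] hveb hsub p1 p2 p3 a1 a2 a3 h1 h2 h3 d12 d13 d23
    ha1 ha2 ha3 e12 e13 e23 M1 M2 M3 a1M3 a2M3 p3M3 a1M2 a3M2 p2M2 a2M1 a3M1 p1M1.
  assert (c22 : collinear inc a2 p2).
  { apply (hgam a2 M2 a1 a3 e13 a1M2 a3M2).
    - exists M3; auto. - exists M1; auto. - auto. }
  assert (c23 : collinear inc p2 p3).
  { apply (hgam p2 M3 a1 a2 e12 a1M3 a2M3).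
    - exists M2; auto. - destruct c22 as [K [k1 k2]]; exists K; auto. - auto. }
  destruct c23 as [D [p2D p3D]].
  assert (M23 : M2 <> M3).
  { intro e; subst. apply ha1. exact (offH hsub p2M2 p3M3 h2 h3 d23 a1M2). }
  assert (M1D : M1 <> D).
  { intro e; subst. apply ha2. exact (offH hsub p2D p3D h2 h3 d23 a2M1). }
  assert (a1M1 : ~ inc a1 M1).
  { intro e. assert (M1 = M3) by exact (line_eq hpls e12 e a2M1 a1M3 a2M3).
    subst. apply ha1. exact (offH hsub p1M1 p3M3 h1 h3 d13 a1M3). }
  assert (a1D : ~ inc a1 D).
  { intro e. apply ha1. exact (offH hsub p2D p3D h2 h3 d23 e). }
  destruct (hveb a1 M2 M3 M1 D M23 a1M2 a1M3 M1D a1M1 a1D) as [x [xM1 xD]].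
  - exists a3; auto. - exists a2; auto. - exists p2; auto. - exists p3; auto.
  - assert (hx : H x) by exact (offH hsub p2D p3D h2 h3 d23 xD).
    destruct (classic (x = p1)) as [ex|nx].
    + subst. exists D; auto.
    + exfalso. apply ha2. exact (offH hsub xM1 p1M1 hx h1 nx a2M1).
Qed.
Theorem proposition2p5 (P Ln : Type) (inc : P -> Ln -> Prop) (H : P -> Prop) :
  gamma_space inc -> veblenian inc -> lines_thick inc -> flappy inc H ->
  (forall p1 p2 p3 : P,
     H p1 -> H p2 -> H p3 -> p1 <> p2 -> p1 <> p3 -> p2 <> p3 ->
     ((exists L : Ln, inc p1 L /\ inc p2 L /\ inc p3 L) <->
      (exists a1 a2 a3 : P, ~ H a1 /\ ~ H a2 /\ ~ H a3 /\
         (a1 <> a2 /\ exists L : Ln, inc a1 L /\ inc a2 L /\ inc p3 L) /\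
         (a1 <> a3 /\ exists L : Ln, inc a1 L /\ inc a3 L /\ inc p2 L) /\
         (a2 <> a3 /\ exists L : Ln, inc a2 L /\ inc a3 L /\ inc p1 L)))) /\
  (forall (L1 L2 L3 : Ln) (p1 p2 p3 : P),
     ~ line_in inc L1 H -> ~ line_in inc L2 H -> ~ line_in inc L3 H ->
     at_infinity inc H L1 p1 -> at_infinity inc H L2 p2 -> at_infinity inc H L3 p3 ->
     p1 <> p2 -> p1 <> p3 -> p2 <> p3 ->
     ((exists L : Ln, inc p1 L /\ inc p2 L /\ inc p3 L) <->
      (exists K1 K2 K3 : Ln, triangle_sides inc H K1 K2 K3 /\
         parallel_H inc H K1 L1 /\ parallel_H inc H K2 L2 /\
         parallel_H inc H K3 L3))).
Proof.
  intros hG hveb hth hfl.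
  pose proof hG as [hpls hgam].
  pose proof hfl as [[hsub [_ _]] _].
  assert (P1 : forall p1 p2 p3 : P,
     H p1 -> H p2 -> H p3 -> p1 <> p2 -> p1 <> p3 -> p2 <> p3 ->
     ((exists L : Ln, inc p1 L /\ inc p2 L /\ inc p3 L) <->
      (exists a1 a2 a3 : P, ~ H a1 /\ ~ H a2 /\ ~ H a3 /\
         (a1 <> a2 /\ exists L : Ln, inc a1 L /\ inc a2 L /\ inc p3 L) /\
         (a1 <> a3 /\ exists L : Ln, inc a1 L /\ inc a3 L /\ inc p2 L) /\
         (a2 <> a3 /\ exists L : Ln, inc a2 L /\ inc a3 L /\ inc p1 L)))).
  { intros p1 p2 p3 h1 h2 h3 d12 d13 d23. split.
    - exact (fwd hG hveb hth hfl h1 h2 h3 d12 d13 d23).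
    - intros [a1 [a2 [a3 [ha1 [ha2 [ha3 [[e12 [M3 [x1 [x2 x3]]]]
        [[e13 [M2 [y1 [y2 y3]]]] [e23 [M1 [z1 [z2 z3]]]]]]]]]]]].
      exact (bwd hG hveb hsub h1 h2 h3 d12 d13 d23 ha1 ha2 ha3 e12 e13 e23 M1 M2 M3
        x1 x2 x3 y1 y2 y3 z1 z2 z3). }
  split; [exact P1|].
  intros L1 L2 L3 p1 p2 p3 n1 n2 n3 [i1 h1] [i2 h2] [i3 h3] d12 d13 d23.
  split.
  - intro hc. destruct (proj1 (P1 p1 p2 p3 h1 h2 h3 d12 d13 d23) hc)
      as [a1 [a2 [a3 [ha1 [ha2 [ha3 [[e12 [M3 [x1 [x2 x3]]]]
        [[e13 [M2 [y1 [y2 y3]]]] [e23 [M1 [z1 [z2 z3]]]]]]]]]]]].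
    exists M1, M2, M3. split.
    + split; [intro e; apply ha2; auto|].
      split; [intro e; apply ha1; auto|].
      split; [intro e; apply ha1; auto|].
      exists a1, a2, a3. do 12 (split; [auto|]).
      intros [L [b1 [b2 b3]]].
      assert (L = M3) by exact (line_eq hpls e12 b1 b2 x1 x2).
      assert (L = M2) by exact (line_eq hpls e13 b1 b3 y1 y2).
      subst. apply ha1. exact (offH hsub y3 x3 h2 h3 d23 b1).
    + split; [exists p1; repeat split; auto|].
      split; [exists p2; repeat split; auto|].
      exists p3; repeat split; auto.
  - intros [K1 [K2 [K3 [T [PA1 [PA2 PA3]]]]]].
    destruct T as [_ [_ [_ [b1 [b2 [b3 [hb1 [hb2 [hb3 [e12 [e13 [e23
      [k21 [k31 [k12 [k32 [k13 [k23 _]]]]]]]]]]]]]]]]]].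
    destruct PA1 as [q1 [[q1K h1'] [q1L _]]].
    destruct PA2 as [q2 [[q2K h2'] [q2L _]]].
    destruct PA3 as [q3 [[q3K h3'] [q3L _]]].
    assert (E : forall (L : Ln) p q, ~ line_in inc L H -> inc p L -> inc q L ->
      H p -> H q -> p = q).
    { intros L p q nL ip iq hp hq. destruct (classic (p = q)) as [|nq]; auto.
      exfalso; apply nL. intros x hx. exact (offH hsub ip iq hp hq nq hx). }
    assert (q1 = p1) by exact (E L1 q1 p1 n1 q1L i1 h1' h1).
    assert (q2 = p2) by exact (E L2 q2 p2 n2 q2L i2 h2' h2).
    assert (q3 = p3) by exact (E L3 q3 p3 n3 q3L i3 h3' h3).
    subst.
    exact (bwd hG hveb hsub h1 h2 h3 d12 d13 d23 hb1 hb2 hb3 e12 e13 e23 K1 K2 K3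
        k13 k23 q3K k12 k32 q2K k21 k31 q1K).
Qed.
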